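(* Let $\kappa>0$, let $V:[0,1]\to\mathbb R$ be smooth, and let $\theta:[0,1]\to\mathbb R$ be smooth with $\theta>0$ on $(0,1)$, $\theta(0)=\theta(1)=0$, $\theta'(0)>0$, $\theta'(1)<0$. Let $(\lambda,w,z)$ be the continuous characteristic triple. Then $$w(x)z(x)=\frac1C\,\frac{w^2(x)e^{-2V(x)/\kappa}}{\theta(x)},\qquad x\in(0,1),$$ where $C=\int_0^1\frac{w^2(x)e^{-2V(x)/\kappa}}{\theta(x)}\,dx>0$.
   Context: The continuous characteristic triple $(\lambda,w,z)$ consists of the principal eigenvalue $\lambda$ and positive (on $(0,1)$) principal eigenfunctions of the problems $$-\tfrac\kappa2(\theta z)''-(\theta zV')'=\lambda z\ \text{on }(0,1),\quad \lim_{x\to0,1}\theta(x)z(x)=0,$$ $$-\tfrac\kappa2\theta w''+\theta V'w'=\lambda w\ \text{on }(0,1),\quad w(0)=w(1)=0,$$ normalised by $\int_0^1z\,dx=1$ and $\int_0^1wz\,dx=1$ (these principal eigenpairs exist and are unique up to normalisation). *)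

(* Defs.v *)
From Stdlib Require Import Reals Lra.
From Coquelicot Require Import Coquelicot.
Open Scope R_scope.

(* f is smooth (C^infinity); used for functions R -> R whose restriction to
   [0,1] is the paper's smooth function. *)
Definition smooth (f : R -> R) : Prop := forall (n : nat) (x : R), ex_derive_n f n x.

Definition in_open01 (x : R) : Prop := 0 < x < 1.

Definition w_eigen (k : R) (V th : R -> R) (mu : R) (w : R -> R) : Prop :=
  (forall x, in_open01 x -> ex_derive w x /\ ex_derive (Derive w) x) /\
  (forall x, in_open01 x ->
     - (k / 2) * th x * Derive (Derive w) x + th x * Derive V x * Derive w x
     = mu * w x) /\
  w 0 = 0 /\ w 1 = 0 /\
  filterlim w (at_right 0) (locally 0) /\ filterlim w (at_left 1) (locally 0).

Definition z_eigen (k : R) (V th : R -> R) (mu : R) (z : R -> R) : Prop :=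
  (forall x, in_open01 x ->
     ex_derive (fun y => th y * z y) x /\
     ex_derive (Derive (fun y => th y * z y)) x /\
     ex_derive (fun y => th y * z y * Derive V y) x) /\
  (forall x, in_open01 x ->
     - (k / 2) * Derive (Derive (fun y => th y * z y)) x
     - Derive (fun y => th y * z y * Derive V y) x
     = mu * z x) /\
  filterlim (fun y => th y * z y) (at_right 0) (locally 0) /\
  filterlim (fun y => th y * z y) (at_left 1) (locally 0).

Definition char_triple (k : R) (V th : R -> R) (lam : R) (w z : R -> R) : Prop :=
  w_eigen k V th lam w /\ z_eigen k V th lam z /\
  (forall x, in_open01 x -> 0 < w x /\ 0 < z x) /\
  (forall mu u, w_eigen k V th mu u -> (exists x, in_open01 x /\ u x <> 0) -> lam <= mu) /\
  (forall mu u, z_eigen k V th mu u -> (exists x, in_open01 x /\ u x <> 0) -> lam <= mu) /\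
  is_RInt_gen z (at_right 0) (at_left 1) 1 /\
  is_RInt_gen (fun x => w x * z x) (at_right 0) (at_left 1) 1.

(* Main.v *)
Require Import Defs.
From Stdlib Require Import Reals Lra.
From Coquelicot Require Import Coquelicot.
Open Scope R_scope.

Lemma right_lim0 (f : R -> R) l : filterlim f (at_right 0) (locally l) ->
  forall eps, 0 < eps -> exists d, 0 < d /\ forall t, 0 < t < d -> Rabs (f t - l) < eps.
Proof.
intros H eps He.
destruct (H (ball l (mkposreal eps He)) (locally_ball _ _)) as [d Hd].
exists d. split. apply cond_pos. intros t Ht.
assert (B : ball 0 d t).
{ unfold ball; simpl; unfold AbsRing_ball, abs, minus, plus, opp; simpl.
  rewrite Ropp_0, Rplus_0_r, Rabs_pos_eq; lra. }
specialize (Hd t B (proj1 Ht)). exact Hd.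
Qed.

Lemma left_lim1 (f : R -> R) l : filterlim f (at_left 1) (locally l) ->
  forall eps, 0 < eps -> exists d, 0 < d /\ forall t, 1 - d < t < 1 -> Rabs (f t - l) < eps.
Proof.
intros H eps He.
destruct (H (ball l (mkposreal eps He)) (locally_ball _ _)) as [d Hd].
exists d. split. apply cond_pos. intros t Ht.
assert (B : ball 1 d t).
{ unfold ball; simpl; unfold AbsRing_ball, abs, minus, plus, opp; simpl.
  rewrite Rabs_left; lra. }
specialize (Hd t B (proj2 Ht)). exact Hd.
Qed.

Lemma cont_at (f : R -> R) a : continuous f a ->
  forall eps, 0 < eps -> exists d, 0 < d /\ forall t, Rabs (t - a) < d -> Rabs (f t - f a) < eps.
Proof.
intros H eps He.
destruct (H (ball (f a) (mkposreal eps He)) (locally_ball _ _)) as [d Hd].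
exists d. split. apply cond_pos. intros t Ht. apply Hd. exact Ht.
Qed.

Lemma const01 (f : R -> R) : (forall x, 0 < x < 1 -> is_derive f x 0) ->
  forall x, 0 < x < 1 -> f x = f (1/2).
Proof.
intros H x Hx.
destruct (MVT_gen f x (1/2) (fun _ => 0)) as [c [Hc E]].
- intros t Ht. apply H. unfold Rmin, Rmax in Ht. destruct (Rle_dec x (1/2)); lra.
- intros t Ht. apply continuity_pt_filterlim. apply (ex_derive_continuous f).
  eexists. apply H. unfold Rmin, Rmax in Ht. destruct (Rle_dec x (1/2)); lra.
- lra.
Qed.

Lemma cont_loc01 (f g : R -> R) x : 0 < x < 1 -> (forall y, 0 < y < 1 -> f y = g y) ->
  continuous f x -> continuous g x.
Proof.
intros Hx E Hc. apply (continuous_ext_loc g f x); [|exact Hc].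
assert (Hp : 0 < Rmin x (1 - x)) by (apply Rmin_pos; lra).
exists (mkposreal _ Hp). intros y Hy.
unfold ball in Hy; simpl in Hy; unfold AbsRing_ball, abs, minus, plus, opp in Hy; simpl in Hy.
apply E. apply Rabs_lt_between in Hy. 
assert (Rmin x (1-x) <= x) by apply Rmin_l. assert (Rmin x (1-x) <= 1 - x) by apply Rmin_r. lra.
Qed.

Lemma log_growth (w : R -> R) (c y : R) : 0 < c -> 0 < y ->
  (forall t, 0 < t <= y -> ex_derive w t /\ c / t <= Derive w t) ->
  forall x, 0 < x < y -> c * (ln y - ln x) <= w y - w x.
Proof.
intros Hc Hy H x Hx.
destruct (MVT_gen (fun t => w t - c * ln t) x y (fun t => Derive w t - c * / t)) as [e [He E]].
- intros t Ht. unfold Rmin, Rmax in Ht. destruct (Rle_dec x y); [|lra].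
  apply (is_derive_minus w (fun t => c * ln t)).
  apply Derive_correct. apply H. lra.
  apply (is_derive_scal ln). apply is_derive_ln. lra.
- intros t Ht. unfold Rmin, Rmax in Ht. destruct (Rle_dec x y); [|lra].
  apply continuity_pt_filterlim. apply (ex_derive_continuous (fun t => w t - c * ln t)).
  eexists. apply (is_derive_minus w (fun t => c * ln t)).
  apply Derive_correct. apply H. lra.
  apply (is_derive_scal ln). apply is_derive_ln. lra.
- unfold Rmin, Rmax in He. destruct (Rle_dec x y); [|lra].
  destruct (H e ltac:(lra)) as [_ He2].
  assert (0 <= Derive w e - c * / e).
  { unfold Rdiv in He2. lra. }
  assert (0 <= (Derive w e - c * / e) * (y - x)) by (apply Rmult_le_pos; lra).
  lra.
Qed.

Lemma lin_bound (p : R -> R) M d : 0 <= M -> 0 < d ->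
  (forall t, 0 < t < d -> ex_derive p t /\ Derive p t <= M) ->
  filterlim p (at_right 0) (locally 0) -> forall x, 0 < x < d -> p x <= M * x.
Proof.
intros HM Hd H Hl x Hx.
destruct (Rle_dec (p x) (M * x)) as [|Hn]; [assumption|exfalso].
destruct (right_lim0 p 0 Hl ((p x - M * x)/2) ltac:(lra)) as [e [He He2]].
set (eps := Rmin (x/2) (e/2)).
assert (eps <= x/2) by apply Rmin_l. assert (eps <= e/2) by apply Rmin_r.
assert (0 < eps) by (apply Rmin_pos; lra).
specialize (He2 eps ltac:(lra)). rewrite Rminus_0_r in He2. apply Rabs_lt_between in He2.
destruct (MVT_gen p eps x (Derive p)) as [c [Hc E]].
- intros t Ht. unfold Rmin, Rmax in Ht. destruct (Rle_dec eps x); [|lra].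
  apply Derive_correct, H; lra.
- intros t Ht. unfold Rmin, Rmax in Ht. destruct (Rle_dec eps x); [|lra].
  apply continuity_pt_filterlim. apply (ex_derive_continuous p). apply H; lra.
- unfold Rmin, Rmax in Hc. destruct (Rle_dec eps x); [|lra].
  destruct (H c ltac:(lra)) as [_ Hc2].
  assert (Derive p c * (x - eps) <= M * (x - eps)) by (apply Rmult_le_compat_r; lra).
  assert (0 <= M * eps) by (apply Rmult_le_pos; lra).
  lra.
Qed.

Lemma int_bound (z : R -> R) : (forall x, 0 < x < 1 -> 0 < z x) ->
  is_RInt_gen z (at_right 0) (at_left 1) 1 ->
  exists d, 0 < d < 1/2 /\ forall x I, 0 < x < d -> is_RInt z x (1/2) I -> I <= 2.
Proof.
intros Hz H.
destruct (H (ball 1 (mkposreal 1 Rlt_0_1)) (locally_ball _ _)) as [Q Rr HQ HR HQR].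
destruct HQ as [e1 He1]. destruct HR as [e2 He2].
assert (0 < e1) by apply cond_pos. assert (0 < e2) by apply cond_pos.
exists (Rmin (1/4) e1). split.
{ split. apply Rmin_pos; lra. assert (Rmin (1/4) e1 <= 1/4) by apply Rmin_l. lra. }
intros x I Hx HI.
assert (Rmin (1/4) e1 <= 1/4) by apply Rmin_l. assert (Rmin (1/4) e1 <= e1) by apply Rmin_r.
set (b := Rmax (3/4) (1 - e2/2)).
assert (3/4 <= b) by apply Rmax_l. assert (1 - e2/2 <= b) by apply Rmax_r.
assert (b < 1). { unfold b, Rmax. destruct (Rle_dec (3/4) (1 - e2/2)); lra. }
assert (Qx : Q x).
{ apply He1. unfold ball; simpl; unfold AbsRing_ball, abs, minus, plus, opp; simpl.
  rewrite Ropp_0, Rplus_0_r, Rabs_pos_eq; lra. lra. }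
assert (Rb : Rr b).
{ apply He2. unfold ball; simpl; unfold AbsRing_ball, abs, minus, plus, opp; simpl.
  rewrite Rabs_left; lra. lra. }
destruct (HQR x b Qx Rb) as [y [Hy By]]. simpl in Hy.
unfold ball in By; simpl in By; unfold AbsRing_ball, abs, minus, plus, opp in By; simpl in By.
apply Rabs_lt_between in By.
assert (Ex : ex_RInt z (1/2) b).
{ apply (ex_RInt_Chasles_2 z x). lra. eexists; exact Hy. }
destruct Ex as [J HJ].
assert (J0 : 0 <= J).
{ apply (is_RInt_ge_0 z (1/2) b). lra. exact HJ. intros t Ht. left. apply Hz. lra. }
assert (HC := is_RInt_Chasles z x (1/2) b I J HI HJ).
assert (E1 : RInt z x b = plus I J) by (apply is_RInt_unique; exact HC).
assert (E2 : RInt z x b = y) by (apply is_RInt_unique; exact Hy).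
rewrite E2 in E1. unfold plus in E1; simpl in E1. lra.
Qed.
Lemma flux_bound (z F : R -> R) lam : (forall x, 0 < x < 1 -> 0 < z x) ->
  (forall x, 0 < x < 1 -> continuous z x) ->
  (forall x, 0 < x < 1 -> is_derive F x (- lam * z x)) ->
  is_RInt_gen z (at_right 0) (at_left 1) 1 ->
  exists d B, 0 < d < 1/2 /\ forall x, 0 < x < d -> Rabs (F x) <= B.
Proof.
intros Hz Hc HF H.
destruct (int_bound z Hz H) as [d [Hd Hd2]].
exists d, (Rabs (F (1/2)) + 2 * Rabs lam). split. exact Hd.
intros x Hx.
assert (Ex : ex_RInt z x (1/2)).
{ apply (ex_RInt_continuous (V:=R_CompleteNormedModule)). intros t Ht. unfold Rmin, Rmax in Ht.
  destruct (Rle_dec x (1/2)); [|lra]. apply Hc. lra. }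
destruct Ex as [I HI].
assert (I2 := Hd2 x I Hx HI).
assert (I0 : 0 <= I).
{ apply (is_RInt_ge_0 z x (1/2)). lra. exact HI. intros t Ht. left. apply Hz. lra. }
assert (HD : is_RInt (fun t => - lam * z t) x (1/2) (minus (F (1/2)) (F x))).
{ apply (is_RInt_derive F (fun t => - lam * z t)).
  intros t Ht. unfold Rmin, Rmax in Ht. destruct (Rle_dec x (1/2)); [|lra]. apply HF; lra.
  intros t Ht. unfold Rmin, Rmax in Ht. destruct (Rle_dec x (1/2)); [|lra].
  apply (continuous_mult (fun _ => - lam) z). apply continuous_const. apply Hc; lra. }
assert (HS := is_RInt_scal z x (1/2) (- lam) I HI).
assert (HD' : RInt (fun t => - lam * z t) x (1/2) = minus (F (1/2)) (F x)) by (apply is_RInt_unique; exact HD).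
assert (HS' : RInt (fun t => - lam * z t) x (1/2) = - lam * I) by (apply is_RInt_unique; exact HS).
clear HD HS. rename HD' into HD. rename HS' into HS.
rewrite HS in HD. unfold minus, plus, opp in HD; simpl in HD.
assert (F x = F (1/2) + lam * I) by lra.
rewrite H0.
eapply Rle_trans. apply Rabs_triang. apply Rplus_le_compat_l.
rewrite Rabs_mult, (Rabs_pos_eq I) by lra.
rewrite Rmult_comm. apply Rmult_le_compat_r. apply Rabs_pos. lra.
Qed.

Lemma deriv_lb k M P D t L : 0 < k -> 0 < M -> 0 < t -> 0 < P -> P <= M * t -> 0 < L ->
  L / 2 <= k / 2 * P * D -> L / (k * M) / t <= D.
Proof.
intros Hk HM Ht HP HPM HL H.
assert (PD : L / k <= P * D).
{ apply (Rmult_le_reg_l (k/2)). lra.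
  replace (k/2 * (L/k)) with (L/2) by (field; lra). lra. }
assert (D0 : 0 < D).
{ destruct (Rle_dec D 0) as [h|h]; [|lra].
  assert (P * D <= 0) by (apply Rmult_le_0_l; lra).
  assert (0 < L / k) by (apply Rdiv_lt_0_compat; lra). lra. }
assert (P * D <= M * t * D) by (apply Rmult_le_compat_r; lra).
assert (Mt : 0 < M * t) by (apply Rmult_lt_0_compat; lra).
replace (L / (k * M) / t) with ((L / k) * / (M * t)) by (field; lra).
replace D with ((M * t * D) * / (M * t)) by (field; lra).
apply Rmult_le_compat_r. left; apply Rinv_0_lt_compat; lra. lra.
Qed.

Lemma pick_x (c y s : R) : 0 < c -> 0 < y -> 0 < s ->
  exists x, 0 < x < y /\ c * (ln y - ln x) = s.
Proof.
intros Hc Hy Hs. exists (y * exp (- s / c)).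
assert (E : exp (- s / c) < 1).
{ rewrite <- exp_0. apply exp_increasing.
  assert (0 < s / c) by (apply Rdiv_lt_0_compat; lra). unfold Rdiv in *. lra. }
assert (E0 := exp_pos (- s / c)).
split. split. apply Rmult_lt_0_compat; lra.
replace y with (y * 1) at 2 by ring. apply Rmult_lt_compat_l; lra.
rewrite ln_mult, ln_exp by lra. field. lra.
Qed.

Theorem lemma9 (k : R) (V th : R -> R) (lam : R) (w z : R -> R) :
  0 < k ->
  smooth V -> smooth th ->
  (forall x, in_open01 x -> 0 < th x) ->
  th 0 = 0 -> th 1 = 0 ->
  0 < Derive th 0 -> Derive th 1 < 0 ->
  char_triple k V th lam w z ->
  exists C : R,
    is_RInt_gen (fun x => (w x) ^ 2 * exp (- 2 * V x / k) / th x)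
      (at_right 0) (at_left 1) C /\
    0 < C /\
    forall x, in_open01 x ->
      w x * z x = / C * ((w x) ^ 2 * exp (- 2 * V x / k) / th x).
Proof.
intros Hk HV Hth Hthpos th0 th1 d0 d1 [Hw [Hz [Hpos [_ [_ [Hzint Hwzint]]]]]].
destruct Hw as [Hwd [Hwode [w0 [w1 [wl0 wl1]]]]].
destruct Hz as [Hzd [Hzode [pl0 pl1]]].
unfold in_open01 in *.
assert (HVd : forall x, ex_derive V x) by (intro x; exact (HV 1%nat x)).
assert (HV2 : forall x, ex_derive (Derive V) x) by (intro x; exact (HV 2%nat x)).
assert (Hthd : forall x, ex_derive th x) by (intro x; exact (Hth 1%nat x)).
set (P := fun y => th y * z y) in *.
assert (Ppos : forall x, 0 < x < 1 -> 0 < P x).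
{ intros x Hx. unfold P. apply Rmult_lt_0_compat. apply Hthpos; auto. apply Hpos; auto. }
assert (Hzc : forall x, 0 < x < 1 -> continuous z x).
{ intros x Hx. apply (cont_loc01 (fun y => P y / th y)). exact Hx.
  intros y Hy. unfold P. field. apply Rgt_not_eq, Hthpos; auto.
  apply (ex_derive_continuous (fun y => P y / th y)). apply ex_derive_div.
  apply Hzd; auto. apply Hthd. apply Rgt_not_eq, Hthpos; auto. }
set (F := fun y => k/2 * Derive P y + P y * Derive V y).
assert (HF : forall x, 0 < x < 1 -> is_derive F x (- lam * z x)).
{ intros x Hx. destruct (Hzd x Hx) as [_ [E1 E2]].
  replace (- lam * z x) with (k/2 * Derive (Derive P) x + Derive (fun y => th y * z y * Derive V y) x)
    by (specialize (Hzode x Hx); lra).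
  apply (is_derive_plus (fun y => k/2 * Derive P y) (fun y => th y * z y * Derive V y)).
  apply (is_derive_scal (Derive P)). apply Derive_correct; exact E1.
  apply Derive_correct; exact E2. }
assert (HFdef : forall y, F y = k/2 * Derive P y + P y * Derive V y) by reflexivity.
clearbody F.
set (Lam := fun y => k/2 * P y * Derive w y - w y * F y).
assert (HL : forall x, 0 < x < 1 -> is_derive Lam x 0).
{ intros x Hx. unfold Lam. destruct (Hwd x Hx) as [W1 W2].
  auto_derive.
  - repeat split; auto. apply Hzd; auto. eexists; apply HF; auto.
  - change (Derive (fun x0 => F x0) x) with (Derive F x). rewrite (is_derive_unique F x _ (HF x Hx)).
    rewrite HFdef. specialize (Hwode x Hx). unfold P. unfold P in Hwode.
    change (Derive (fun x0 => w x0) x) with (Derive w x).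
    change (Derive (fun x0 => Derive w x0) x) with (Derive (Derive w) x).
    change (Derive (fun x0 => th x0 * z x0) x) with (Derive P x). unfold P.
    assert (E : k/2 * th x * Derive (Derive w) x = th x * Derive V x * Derive w x - lam * w x) by lra.
    transitivity (z x * (k/2 * th x * Derive (Derive w) x - (th x * Derive V x * Derive w x - lam * w x))).
    ring. rewrite E. ring. }
assert (HLc := const01 Lam HL).
set (L := Lam (1/2)) in HLc. clearbody L.
assert (Hkey : forall x, 0 < x < 1 -> k/2 * P x * Derive w x = L + w x * F x).
{ intros x Hx. rewrite <- (HLc x Hx). unfold Lam. ring. }
destruct (flux_bound z F lam (fun x Hx => proj2 (Hpos x Hx)) Hzc HF Hzint) as [d [B [Hd HB]]].
assert (B0 : 0 <= B) by (eapply Rle_trans; [apply Rabs_pos | apply (HB (d/2)); lra]).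
destruct (cont_at (Derive V) 0 (ex_derive_continuous _ _ (HV2 0)) 1 Rlt_0_1) as [dV [HdV HV']].
destruct (right_lim0 P 0 pl0 1 Rlt_0_1) as [dP [HdP HP']].
set (d' := Rmin d (Rmin dV dP)).
assert (d'1 : d' <= d) by apply Rmin_l.
assert (d'2 : d' <= dV) by (eapply Rle_trans; [apply Rmin_r | apply Rmin_l]).
assert (d'3 : d' <= dP) by (eapply Rle_trans; [apply Rmin_r | apply Rmin_r]).
assert (d'0 : 0 < d') by (apply Rmin_pos; [lra | apply Rmin_pos; lra]).
set (K0 := B + Rabs (Derive V 0) + 1).
assert (K0p : 1 <= K0) by (unfold K0; assert (0 <= Rabs (Derive V 0)) by apply Rabs_pos; lra).
set (M := 2 * K0 / k).
assert (Mp : 0 < M) by (unfold M; apply Rdiv_lt_0_compat; lra).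
assert (HPM : forall x, 0 < x < d' -> P x <= M * x).
{ apply (lin_bound P M d'). lra. lra. 2: exact pl0.
  intros t Ht. split. apply Hzd; lra.
  assert (A1 : Rabs (Derive V t) <= Rabs (Derive V 0) + 1).
  { assert (Rabs (Derive V t - Derive V 0) < 1) by (apply HV'; rewrite Rminus_0_r, Rabs_pos_eq; lra).
    assert (Rabs (Derive V t) <= Rabs (Derive V t - Derive V 0) + Rabs (Derive V 0)).
    { replace (Derive V t) with ((Derive V t - Derive V 0) + Derive V 0) at 1 by ring. apply Rabs_triang. }
    lra. }
  assert (A2 : Rabs (P t) <= 1).
  { left. replace (P t) with (P t - 0) by ring. apply HP'; lra. }
  assert (A3 : Rabs (P t * Derive V t) <= Rabs (Derive V 0) + 1).
  { rewrite Rabs_mult. replace (Rabs (Derive V 0) + 1) with (1 * (Rabs (Derive V 0) + 1)) by ring.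
    apply Rmult_le_compat; try apply Rabs_pos; lra. }
  assert (A4 : Rabs (F t) <= B) by (apply HB; lra).
  rewrite HFdef in A4.
  apply Rabs_le_between in A3. apply Rabs_le_between in A4.
  assert (k/2 * Derive P t <= K0) by (unfold K0; lra).
  unfold M. apply (Rmult_le_reg_l (k/2)). lra.
  replace (k/2 * (2 * K0 / k)) with K0 by (field; lra). lra. }
assert (L0 : L = 0).
{ set (eps := Rabs L / (2 * (B + 1))).
  destruct (Req_dec L 0) as [h|hL]; [exact h|exfalso].
  assert (Lp : 0 < Rabs L) by (apply Rabs_pos_lt; exact hL).
  assert (epsp : 0 < eps) by (unfold eps; apply Rdiv_lt_0_compat; lra).
  destruct (right_lim0 w 0 wl0 eps epsp) as [dw [Hdw Hw']].
  set (y := Rmin d' dw / 2).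
  assert (y1 : Rmin d' dw <= d') by apply Rmin_l.
  assert (y2 : Rmin d' dw <= dw) by apply Rmin_r.
  assert (y0 : 0 < Rmin d' dw) by (apply Rmin_pos; lra).
  assert (Hy0 : 0 < y) by (unfold y; lra).
  assert (HwF : forall t, 0 < t <= y -> Rabs (w t * F t) < Rabs L / 2).
  { intros t Ht. rewrite Rabs_mult.
    assert (Rabs (w t) < eps) by (rewrite <- (Rminus_0_r (w t)); apply Hw'; unfold y in Ht; lra).
    assert (Rabs (F t) <= B) by (apply HB; unfold y in Ht; lra).
    assert (Rabs (w t) * Rabs (F t) <= eps * B) by (apply Rmult_le_compat; try apply Rabs_pos; lra).
    assert (eps * B < Rabs L / 2).
    { unfold eps. apply (Rmult_lt_reg_r (2 * (B + 1))). lra.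
      replace (Rabs L / (2 * (B + 1)) * B * (2 * (B + 1))) with (Rabs L * B) by (field; lra).
      replace (Rabs L / 2 * (2 * (B + 1))) with (Rabs L * B + Rabs L) by (field; lra). lra. }
    lra. }
  destruct (Rlt_dec 0 L) as [Lpos|Lneg].
  - rewrite Rabs_pos_eq in HwF by lra.
    set (c := L / (k * M) ).
    assert (cp : 0 < c) by (unfold c; apply Rdiv_lt_0_compat; [lra | apply Rmult_lt_0_compat; lra]).
    assert (Hg := log_growth w c y cp Hy0).
    destruct (pick_x c y (w y + c) cp Hy0) as [x [Hx Hxe]].
    { assert (0 < w y) by (apply Hpos; unfold y; lra). lra. }
    assert (Hxx : c * (ln y - ln x) <= w y - w x).
    { apply Hg; [|exact Hx]. intros t Ht.
      assert (t1 : 0 < t < 1) by (unfold y in Ht; lra).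
      split. apply Hwd; exact t1.
      unfold c. apply (deriv_lb k M (P t) (Derive w t) t L); try lra.
      apply Ppos; exact t1. apply HPM; unfold y in Ht; lra.
      rewrite Hkey by exact t1. specialize (HwF t Ht). apply Rabs_lt_between in HwF. lra. }
    assert (0 < w x) by (apply Hpos; unfold y in Hx; lra). lra.
  - assert (Ln : L < 0) by lra.
    rewrite Rabs_left in HwF by lra.
    set (c := - L / (k * M) ).
    assert (cp : 0 < c) by (unfold c; apply Rdiv_lt_0_compat; [lra | apply Rmult_lt_0_compat; lra]).
    assert (Hg := log_growth (fun t => - w t) c y cp Hy0).
    destruct (pick_x c y (eps + 1) cp Hy0) as [x [Hx Hxe]].
    { lra. }
    assert (Hxx : c * (ln y - ln x) <= - w y - - w x).
    { apply Hg; [|exact Hx]. intros t Ht.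
      assert (t1 : 0 < t < 1) by (unfold y in Ht; lra).
      split. apply (ex_derive_opp (K:=R_AbsRing) (V:=R_NormedModule) w). apply Hwd; exact t1.
      rewrite Derive_opp.
      unfold c. apply (deriv_lb k M (P t) (- Derive w t) t (- L)); try lra.
      apply Ppos; exact t1. apply HPM; unfold y in Ht; lra.
      replace (k / 2 * P t * - Derive w t) with (- (k / 2 * P t * Derive w t)) by ring.
      rewrite Hkey by exact t1. specialize (HwF t Ht). apply Rabs_lt_between in HwF. lra. }
    assert (0 < w y) by (apply Hpos; unfold y; lra).
    assert (Hwx : Rabs (w x - 0) < eps) by (apply Hw'; unfold y in Hx; lra).
    rewrite Rminus_0_r in Hwx. apply Rabs_lt_between in Hwx. simpl in Hxx. lra. }
rewrite L0 in Hkey.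
set (g := fun y => P y / (w y * exp (- 2 * V y / k))).
assert (Hg : forall x, 0 < x < 1 -> is_derive g x 0).
{ intros x Hx. unfold g.
  assert (wp : 0 < w x) by (apply Hpos; exact Hx).
  assert (Ep := exp_pos (- 2 * V x / k)).
  auto_derive.
  - repeat split. apply Hzd; exact Hx. apply Hwd; exact Hx. apply HVd.
    apply Rgt_not_eq. apply Rmult_lt_0_compat; lra.
  - change (Derive (fun x0 => P x0) x) with (Derive P x).
    change (Derive (fun x0 => w x0) x) with (Derive w x).
    change (Derive (fun x0 => V x0) x) with (Derive V x).
    specialize (Hkey x Hx). rewrite HFdef in Hkey.
    change (exp (-2 * V x / k)) with (exp (-2 * V x * / k)) in Ep.
    set (E := exp (-2 * V x * / k)) in *.
    transitivity ((k/2 * Derive P x * w x + P x * Derive V x * w x - k/2 * P x * Derive w x) * (2 / k) / (w x * w x * E)).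
    field. repeat split; apply Rgt_not_eq; lra.
    replace (k/2 * Derive P x * w x + P x * Derive V x * w x - k/2 * P x * Derive w x) with 0 by lra.
    field. repeat split; apply Rgt_not_eq; lra. }
assert (Hgc := const01 g Hg).
set (c := g (1/2)) in Hgc.
assert (cp : 0 < c).
{ unfold c, g. apply Rdiv_lt_0_compat. apply Ppos; lra.
  apply Rmult_lt_0_compat. apply Hpos; lra. apply exp_pos. }
clearbody c.
assert (Hwz : forall x, 0 < x < 1 -> w x * z x = c * (w x ^ 2 * exp (- 2 * V x / k) / th x)).
{ intros x Hx. specialize (Hgc x Hx). unfold g, P in Hgc.
  assert (wp : 0 < w x) by (apply Hpos; exact Hx).
  assert (Ep := exp_pos (- 2 * V x / k)).
  assert (thp : 0 < th x) by (apply Hthpos; exact Hx).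
  assert (z x = c * w x * exp (- 2 * V x / k) / th x).
  { rewrite <- Hgc. field. split; lra. }
  rewrite H. field. lra. }
exists (/ c). split; [|split].
- apply (is_RInt_gen_ext (fun y => scal (/ c) (w y * z y))).
  + exists (fun a => 0 < a < 1) (fun b => 0 < b < 1).
    * exists (mkposreal 1 Rlt_0_1). intros y Hy Hy0.
      unfold ball in Hy; simpl in Hy; unfold AbsRing_ball, abs, minus, plus, opp in Hy; simpl in Hy.
      apply Rabs_lt_between in Hy. lra.
    * exists (mkposreal 1 Rlt_0_1). intros y Hy Hy0.
      unfold ball in Hy; simpl in Hy; unfold AbsRing_ball, abs, minus, plus, opp in Hy; simpl in Hy.
      apply Rabs_lt_between in Hy. lra.
    * intros a b Ha Hb t Ht. simpl in Ht.
      assert (0 < t < 1).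
      { unfold Rmin, Rmax in Ht. destruct (Rle_dec a b); lra. }
      change (scal (/ c) (w t * z t)) with (/ c * (w t * z t)).
      assert (Eq1 : / c * (w t * z t) = w t ^ 2 * exp (- 2 * V t / k) / th t) by (rewrite Hwz by exact H; field; split; apply Rgt_not_eq; [apply Hthpos; exact H | lra]). exact Eq1.
  + assert (HS := is_RInt_gen_scal (fun y => w y * z y) (/ c) 1 Hwzint).
    assert (Es : scal (/ c) (1 : R_NormedModule) = / c).
    { change (/ c * 1 = / c). ring. }
    rewrite Es in HS. exact HS.
- apply Rinv_0_lt_compat; exact cp.
- intros x Hx. rewrite Rinv_inv. apply Hwz; exact Hx.
Qed.
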